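(* (Darboux transformation of eigenfunctions.) Let $(\Omega(\mathcal{A}),\mathrm{d},\bar{\mathrm{d}})$ be a bidifferential graded algebra and $\phi\in\mathcal{A}$. Let $\Delta,\Delta'\in\mathcal{A}$ satisfy $\bar{\mathrm{d}}\Delta=(\mathrm{d}\Delta)\Delta$ and $\bar{\mathrm{d}}\Delta'=(\mathrm{d}\Delta')\Delta'$. Let $\psi\in\mathcal{A}$ satisfy $\bar{\mathrm{d}}\psi=(\mathrm{d}\phi)\psi+(\mathrm{d}\psi)\Delta$, let $\theta\in\mathcal{A}$ be invertible with $\bar{\mathrm{d}}\theta=(\mathrm{d}\phi)\theta+(\mathrm{d}\theta)\Delta'$, let $C'\in\mathcal{A}$ with $\mathrm{d}C'=0$, and let $\mathcal{M}\in\mathcal{A}$ satisfy $\bar{\mathrm{d}}\mathcal{M}=(\mathrm{d}\mathcal{M})\Delta$ and $\Delta\mathcal{M}=\mathcal{M}\Delta$. Set $$\phi':=\phi+\theta\Delta'\theta^{-1}-C',\qquad \psi':=(\psi\Delta-\theta\Delta'\theta^{-1}\psi)\,\mathcal{M}.$$ Then $\bar{\mathrm{d}}\psi'=(\mathrm{d}\phi')\,\psi'+(\mathrm{d}\psi')\,\Delta$.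
   Context: $\mathcal{A}$ is a unital associative algebra over $\mathbb{C}$ with identity $I$. A bidifferential graded algebra $(\Omega(\mathcal{A}),\mathrm{d},\bar{\mathrm{d}})$ consists of a graded associative algebra $\Omega(\mathcal{A})=\bigoplus_{r\ge 0}\Omega^r(\mathcal{A})$ with $\Omega^0(\mathcal{A})=\mathcal{A}$ (each $\Omega^r(\mathcal{A})$ an $\mathcal{A}$-bimodule) together with two linear maps $\mathrm{d},\bar{\mathrm{d}}:\Omega^r(\mathcal{A})\to\Omega^{r+1}(\mathcal{A})$ satisfying the graded Leibniz rule $\mathrm{d}(\alpha\beta)=(\mathrm{d}\alpha)\beta+(-1)^r\alpha\,\mathrm{d}\beta$ for $\alpha\in\Omega^r(\mathcal{A})$ (and likewise for $\bar{\mathrm{d}}$), and $\mathrm{d}^2=\bar{\mathrm{d}}^2=0$, $\mathrm{d}\bar{\mathrm{d}}+\bar{\mathrm{d}}\mathrm{d}=0$. *)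

(* Defs.v *)
From HB Require Import structures.
From mathcomp Require Import all_boot all_order all_algebra.
Set Implicit Arguments. Unset Strict Implicit. Unset Printing Implicit Defensive.
Import GRing.Theory.
Local Open Scope ring_scope.

(* The total space Omega = \bigoplus_r Omega^r is the unital associative
   K-algebra [Om]; [deg r] is the homogeneous component Omega^r, and
   Omega^0 = A is [deg 0]. *)
Record bidga (K : fieldType) (Om : algType K) := BiDGA {
  deg : nat -> {pred Om};
  deg_0 : forall r, 0 \in deg r;
  deg_D : forall r x y, x \in deg r -> y \in deg r -> x + y \in deg r;
  deg_Z : forall r (a : K) x, x \in deg r -> a *: x \in deg r;
  deg_1 : 1 \in deg 0;
  deg_M : forall r s x y, x \in deg r -> y \in deg s -> x * y \in deg (r + s);
  deg_span : forall x : Om, exists n (f : nat -> Om),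
      (forall i, f i \in deg i) /\ x = \sum_(i < n) f i;
  deg_direct : forall n (f : nat -> Om), (forall i, f i \in deg i) ->
      \sum_(i < n) f i = 0 -> forall i, (i < n)%N -> f i = 0;
  d : Om -> Om;
  db : Om -> Om;
  d_add : forall x y, d (x + y) = d x + d y;
  d_scale : forall (a : K) x, d (a *: x) = a *: d x;
  db_add : forall x y, db (x + y) = db x + db y;
  db_scale : forall (a : K) x, db (a *: x) = a *: db x;
  d_deg : forall r x, x \in deg r -> d x \in deg r.+1;
  db_deg : forall r x, x \in deg r -> db x \in deg r.+1;
  d_leibniz : forall r x y, x \in deg r ->
      d (x * y) = d x * y + (-1) ^+ r * (x * d y);
  db_leibniz : forall r x y, x \in deg r ->
      db (x * y) = db x * y + (-1) ^+ r * (x * db y);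
  d_d : forall x, d (d x) = 0;
  db_db : forall x, db (db x) = 0;
  d_db : forall x, d (db x) + db (d x) = 0
}.

(* Main.v *)
Require Import Defs.
From HB Require Import structures.
From mathcomp Require Import all_boot all_order all_algebra.
Import GRing.Theory.
Local Open Scope ring_scope.

Theorem mainTheorem5 (K : fieldType) (Om : algType K) (B : bidga Om)
  (phi D D' psi th thi C' M : Om)
  (Hphi : phi \in deg B 0) (HD : D \in deg B 0) (HD' : D' \in deg B 0)
  (Hpsi : psi \in deg B 0) (Hth : th \in deg B 0) (Hthi : thi \in deg B 0)
  (HC' : C' \in deg B 0) (HM : M \in deg B 0)
  (Hthr : th * thi = 1) (Hthl : thi * th = 1)
  (eqD : db B D = d B D * D) (eqD' : db B D' = d B D' * D')
  (eqpsi : db B psi = d B phi * psi + d B psi * D)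
  (eqth : db B th = d B phi * th + d B th * D')
  (eqC' : d B C' = 0)
  (eqM : db B M = d B M * D) (commM : D * M = M * D) :
  let phi' := phi + th * D' * thi - C' in
  let psi' := (psi * D - th * D' * thi * psi) * M in
  db B psi' = d B phi' * psi' + d B psi' * D.
Proof.
move=> phi' psi'.
have d0 : d B 0 = 0.
  by apply: (addrI (d B 0)); rewrite addr0 -d_add addr0.
have dN x : d B (- x) = - d B x.
  by apply: (addrI (d B x)); rewrite -d_add !subrr d0.
have dB x y : d B (x - y) = d B x - d B y by rewrite d_add dN.
have b0 : db B 0 = 0.
  by apply: (addrI (db B 0)); rewrite addr0 -db_add addr0.
have bN x : db B (- x) = - db B x.
  by apply: (addrI (db B x)); rewrite -db_add !subrr b0.
have bB x y : db B (x - y) = db B x - db B y by rewrite db_add bN.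
have dM x y : x \in deg B 0 -> d B (x * y) = d B x * y + x * d B y.
  by move=> hx; rewrite (d_leibniz y hx) expr0 mul1r.
have bM x y : x \in deg B 0 -> db B (x * y) = db B x * y + x * db B y.
  by move=> hx; rewrite (db_leibniz y hx) expr0 mul1r.
have gM x y : x \in deg B 0 -> y \in deg B 0 -> x * y \in deg B 0.
  by move=> hx hy; exact: (deg_M hx hy).
have gB x y : x \in deg B 0 -> y \in deg B 0 -> x - y \in deg B 0.
  by move=> hx hy; apply: deg_D => //; rewrite -scaleN1r; apply: deg_Z.
have d1 : d B 1 = 0.
  have h := dM 1 1 (deg_1 B); rewrite !mulr1 mul1r in h.
  by apply: (addrI (d B 1)); rewrite addr0 -h.
have b1 : db B 1 = 0.
  have h := bM 1 1 (deg_1 B); rewrite !mulr1 mul1r in h.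
  by apply: (addrI (db B 1)); rewrite addr0 -h.
have dthi : d B thi = - (thi * d B th * thi).
  have h := dM th thi Hth; rewrite Hthr d1 in h.
  have e : th * d B thi = - (d B th * thi).
    by apply/eqP; rewrite -addr_eq0 addrC -h.
  by rewrite -[d B thi]mul1r -Hthl -mulrA e mulrN mulrA.
have bthi : db B thi = - (thi * db B th * thi).
  have h := bM th thi Hth; rewrite Hthr b1 in h.
  have e : th * db B thi = - (db B th * thi).
    by apply/eqP; rewrite -addr_eq0 addrC -h.
  by rewrite -[db B thi]mul1r -Hthl -mulrA e mulrN mulrA.
set u := th * D'.
have Hu : u \in deg B 0 by exact: gM.
have eu : db B u = d B phi * u + d B u * D'.
  rewrite /u bM // dM // eqth eqD' !mulrDl !mulrA -addrA.
  by [].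
have K1 x : x * thi * th = x by rewrite -mulrA Hthl mulr1.
have K2 x : x * th * thi = x by rewrite -mulrA Hthr mulr1.
have K3 x : x * thi * u = x * D' by rewrite /u -!mulrA (mulrA thi) Hthl mul1r.
set P := u * thi.
have HP : P \in deg B 0 by exact: gM.
have dP : d B P = d B u * thi - P * d B th * thi.
  by rewrite /P dM // dthi mulrN !mulrA.
have eP : db B P = d B phi * P - P * d B phi + d B P * P.
  rewrite /P bM // bthi eu eqth dP.
  rewrite /P; rewrite ?(mulrDl, mulrDr, mulrBl, mulrBr, mulrN, mulNr, mulrA, opprD, opprK); rewrite ?(K1,K2,K3). by rewrite addrACA.
have dP' : d B phi' = d B phi + d B P by rewrite /phi' dB eqC' subr0 d_add.
set p1 := psi * D.
have Hp1 : p1 \in deg B 0 by exact: gM.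
have ep1 : db B p1 = d B phi * p1 + d B p1 * D.
  rewrite /p1 bM // dM // eqpsi eqD !mulrDl !mulrA -addrA.
  by congr (_ + _).
set chi := p1 - P * psi.
have Hchi : chi \in deg B 0 by apply: gB => //; exact: gM.
have ech : db B chi = (d B phi + d B P) * chi + d B chi * D.
  rewrite /chi bB bM // ep1 eP eqpsi dB dM //.
  apply/eqP; rewrite -subr_eq0; apply/eqP.
  rewrite ?(mulrDl, mulrDr, mulrBl, mulrBr, mulrN, mulNr, mulrA, opprD, opprK, addrA).
  rewrite [LHS](@GRing.add Om).[ACl ((1*8)*(2*12)*(9*3)*(4*6)*(11*5)*(14*7)*(13*10))].
  by rewrite !subrr !addr0.
rewrite /psi' -/u -/P -/p1 -/chi dP'; clearbody chi.
rewrite bM // eqM dM // ech.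
rewrite !mulrDl !mulrA -!(mulrA _ M D) -commM !mulrA -addrA.
by [].
Qed.
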